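(* Let $\mathcal{H}$ be an infinite-dimensional separable Hilbert space with orthonormal bases $\{e_n\}$ and $\{f_n\}$, $\mathcal{D}_e=\mathrm{span}\{e_n\}$, $\mathcal{D}_f=\mathrm{span}\{f_n\}$, $\mathcal{D}_e^2=\mathrm{span}\{|e_k\rangle\langle e_\ell|\}$. Let $\mathcal{Q}$ be a linear map from $\mathcal{D}_e^2$ into sesquilinear forms on $\mathcal{D}_f$ which is completely positive, i.e. $\sum_{k,\ell=1}^N\langle\psi_k|\mathcal{Q}(|\phi_k\rangle\langle\phi_\ell|)|\psi_\ell\rangle\ge0$ for all $N$, $\phi_1,\dots,\phi_N\in\mathcal{D}_e$, $\psi_1,\dots,\psi_N\in\mathcal{D}_f$. Then there exists a countable family of generalized operators $K_\alpha$ (linear maps from $\mathcal{D}_e$ into the conjugate algebraic dual of $\mathcal{D}_f$) such that $\mathcal{Q}(\rho)=\sum_\alpha K_\alpha\rho K_\alpha^\dagger$ for all $\rho\in\mathcal{D}_e^2$, i.e. for all $\phi,\phi'\in\mathcal{D}_e$ and $g,f\in\mathcal{D}_f$, $$\langle g|\mathcal{Q}(|\phi\rangle\langle\phi'|)|f\rangle=\sum_\alpha\langle g|K_\alpha|\phi\rangle\,\langle f|K_\alpha|\phi'\rangle^*.$$ If moreover for each $\rho\in\mathcal{D}_e^2$ there is a bounded operator $\breve{\mathcal{Q}}(\rho)\in\mathcal{B}(\mathcal{H})$ with $\langle g|\mathcal{Q}(\rho)|f\rangle=\langle g|\breve{\mathcal{Q}}(\rho)f\rangle$ for all $f,g\in\mathcal{D}_f$,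 then each $K_\alpha$ is an operator mapping $\mathcal{D}_e$ into $\mathcal{H}$.
   Context: A generalized operator $K$ is a linear map from $\mathcal{D}_e$ into the conjugate algebraic dual of $\mathcal{D}_f$; we write $\langle f|K|e\rangle$ for the value of the functional $Ke$ at $f\in\mathcal{D}_f$. Its adjoint $K^\dagger$ maps $\mathcal{D}_f$ into the conjugate algebraic dual of $\mathcal{D}_e$ via $\langle e|K^\dagger|f\rangle=\langle f|K|e\rangle^*$. ''$K$ maps $\mathcal{D}_e$ into $\mathcal{H}$'' means each functional $Ke$ is of the form $f\mapsto\langle f|v\rangle$ for some $v\in\mathcal{H}$. *)

(* Defs.v *)
From mathcomp Require Import all_boot all_algebra.
From mathcomp Require Import reals complex.
Set Implicit Arguments. Unset Strict Implicit. Unset Printing Implicit Defensive.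
Import GRing.Theory Num.Theory.
Local Open Scope ring_scope.

Section HilbertDefs.
Variable R : realType.
Local Notation C := R[i].
Variable V : lmodType C.
(* Physicists' convention: ip x y = <x|y>, antilinear in x, linear in y. *)
Variable ip : V -> V -> C.

Definition inner_product : Prop :=
  [/\ (forall (a : C) (x y z : V), ip x (a *: y + z) = a * ip x y + ip x z),
      (forall x y : V, ip y x = (ip x y)^*),
      (forall x : V, 0 <= ip x x) &
      (forall x : V, ip x x = 0 -> x = 0)].

Definition normsq (x : V) : C := ip x x.

(* Completeness w.r.t. the norm induced by ip (0 < eps in C forces eps real) *)
Definition ip_complete : Prop :=
  forall u : nat -> V,
    (forall eps : C, 0 < eps -> exists N : nat,
        forall m n : nat, (N <= m)%N -> (N <= n)%N -> normsq (u m - u n) < eps) ->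
    exists l : V, forall eps : C, 0 < eps -> exists N : nat,
        forall n : nat, (N <= n)%N -> normsq (u n - l) < eps.

Definition hilbert_space : Prop := inner_product /\ ip_complete.

Definition orthonormal_basis (e : nat -> V) : Prop :=
  (forall i j : nat, ip (e i) (e j) = (i == j)%:R) /\
  (forall v : V, (forall n : nat, ip (e n) v = 0) -> v = 0).

Definition in_span (e : nat -> V) (v : V) : Prop :=
  exists (n : nat) (c : 'I_n -> C) (k : 'I_n -> nat),
    v = \sum_(i < n) c i *: e (k i).

Definition ketbra (phi phi' : V) : V -> V := fun v => ip phi' v *: phi.

Definition in_span2 (e : nat -> V) (rho : V -> V) : Prop :=
  exists (n : nat) (c : 'I_n -> C) (k l : 'I_n -> nat),
    rho = fun v => \sum_(i < n) c i *: ketbra (e (k i)) (e (l i)) v.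

Definition bounded_operator (T : V -> V) : Prop :=
  (forall (a : C) (x y : V), T (a *: x + y) = a *: T x + T y) /\
  (exists M : C, forall x : V, normsq (T x) <= M * normsq x).

(* Q : rho |-> sesquilinear form on D_f; Q rho g f stands for <g|Q(rho)|f>.
   Q is linear on D_e^2 and each Q rho is sesquilinear on D_f. *)
Definition Q_linear_sesq (e f : nat -> V) (Q : (V -> V) -> V -> V -> C) : Prop :=
  (forall (a : C) (rho sig : V -> V), in_span2 e rho -> in_span2 e sig ->
     forall g h : V, in_span f g -> in_span f h ->
       Q (fun v => a *: rho v + sig v) g h = a * Q rho g h + Q sig g h) /\
  (forall rho : V -> V, in_span2 e rho ->
     (forall (a : C) (g h h' : V), in_span f g -> in_span f h -> in_span f h' ->
        Q rho g (a *: h + h') = a * Q rho g h + Q rho g h') /\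
     (forall (a : C) (g g' h : V), in_span f g -> in_span f g' -> in_span f h ->
        Q rho (a *: g + g') h = a^* * Q rho g h + Q rho g' h)).

Definition completely_positive (e f : nat -> V) (Q : (V -> V) -> V -> V -> C) : Prop :=
  forall (N : nat) (phi psi : 'I_N -> V),
    (forall i, in_span e (phi i)) -> (forall i, in_span f (psi i)) ->
    0 <= \sum_(k < N) \sum_(l < N) Q (ketbra (phi k) (phi l)) (psi k) (psi l).

(* Generalized operator K : D_e -> (D_f)^x (conjugate algebraic dual);
   K phi h stands for <h|K|phi>: linear in phi in D_e, antilinear in h in D_f. *)
Definition generalized_operator (e f : nat -> V) (K : V -> V -> C) : Prop :=
  (forall (a : C) (phi phi' h : V), in_span e phi -> in_span e phi' -> in_span f h ->
     K (a *: phi + phi') h = a * K phi h + K phi' h) /\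
  (forall (a : C) (phi h h' : V), in_span e phi -> in_span f h -> in_span f h' ->
     K phi (a *: h + h') = a^* * K phi h + K phi h').

(* K maps D_e into H: each functional K phi is h |-> <h|v> for some v in H *)
Definition maps_into_H (e f : nat -> V) (K : V -> V -> C) : Prop :=
  forall phi : V, in_span e phi ->
    exists v : V, forall h : V, in_span f h -> K phi h = ip h v.

End HilbertDefs.

(* Unordered (= absolutely convergent) sum over the countable index set nat:
   the family is absolutely summable and its series converges to l. *)
Definition sums_to (R : realType) (u : nat -> R[i]) (l : R[i]) : Prop :=
  (exists M : R[i], forall n : nat, \sum_(i < n) `|u i| <= M) /\
  (forall eps : R[i], 0 < eps -> exists N : nat,
     forall n : nat, (N <= n)%N -> `|\sum_(i < n) u i - l| < eps).

(* Main.v *)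
Require Import Defs.
From mathcomp Require Import all_boot all_algebra.
From mathcomp Require Import reals complex.
From mathcomp Require Import ring lra order zify.
From mathcomp Require Import classical_sets.
From Stdlib Require Import ClassicalEpsilon FunctionalExtensionality.
Import Order.TTheory GRing.Theory Num.Theory.
Local Open Scope ring_scope.
Set Implicit Arguments. Unset Strict Implicit. Unset Printing Implicit Defensive.

Section Chol.
Variable C : numClosedFieldType.

Definition psd (A : nat -> nat -> C) := forall n (c : nat -> C) (x : nat -> nat),
  0 <= \sum_(i < n) \sum_(j < n) c i * (c j)^* * A (x i) (x j).

Lemma psd_ext A B : (forall x y, B x y = A x y) -> psd A -> psd B.
Proof.
move=> E H n c x; have := H n c x.
by under eq_bigr do under eq_bigr do rewrite -E.
Qed.

Lemma psd2 A : psd A -> forall a b (s t : C),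
  0 <= s * s^* * A a a + s * t^* * A a b + t * s^* * A b a + t * t^* * A b b.
Proof.
move=> H a b s t.
have := H 2%N (fun i => if i == 0%N then s else t) (fun i => if i == 0%N then a else b).
rewrite !big_ord_recr !big_ord0 /= !add0r.
by rewrite !addrA.
Qed.

Lemma psd_diag A : psd A -> forall a, 0 <= A a a.
Proof.
move=> H a; have := psd2 H a a 1 0.
by rewrite conjC1 conjC0 !mulr0 !mul0r !addr0 mulr1 mul1r.
Qed.

Lemma real_of_ge0 (z : C) : 0 <= z -> z^* = z.
Proof. exact: geC0_conj. Qed.

Lemma psd_herm A : psd A -> forall a b, A b a = (A a b)^*.
Proof.
move=> H a b.
have Ha := real_of_ge0 (psd_diag H a); have Hb := real_of_ge0 (psd_diag H b).
have H1 := real_of_ge0 (psd2 H a b 1 1).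
have H2 := real_of_ge0 (psd2 H a b 1 'i).
move: H1 H2; rewrite !conjC1 !mul1r !mulr1 !rmorphD !rmorphM /= !conjCK conjCi Ha Hb.
idtac.
set z := A a b; set w := A b a => H1 H2.
have E1 : z^* + w^* - (z + w) = 0.
  by apply/eqP; rewrite subr_eq0; apply/eqP; apply: (addrI (A a a)); apply: (addIr (A b b)); rewrite !addrA.
have E2 : 'i * (z^* - w^* - (w - z)) = 0.
  rewrite -[LHS]/('i * (z^* - w^* - (w - z))).
  have -> : 'i * (z^* - w^* - (w - z)) = (A a a + 'i * z^* + - 'i * w^* + - 'i * 'i * A b b) -
    (A a a + - 'i * z + 'i * w + 'i * - 'i * A b b) by ring.
  by rewrite H2 subrr.
move/eqP: E2; rewrite mulf_eq0 (negPf (neq0Ci C)) /= => /eqP E2.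
have E3 : (w - z^*) * 2%:R = 0.
 have -> : (w - z^*) * 2%:R = - (z^* + w^* - (z + w)) - (z^* - w^* - (w - z)) by ring.
 by rewrite E1 E2 subr0 oppr0.
move/eqP: E3; rewrite mulf_eq0 pnatr_eq0 orbF subr_eq0 => /eqP //.
Qed.


Lemma psd_zero A : psd A -> forall a b, A a a = 0 -> A a b = 0.
Proof.
move=> H a b Haa.
have HP := psd_diag H b; set P := A b b in HP.
set z := A a b; set q := z * z^*.
have Hq : 0 <= q by exact: mul_conjC_ge0.
case: (eqVneq q 0) => [|qn0]; first by move/eqP; rewrite mul_conjC_eq0 => /eqP.
set r := (P + 1) / (2%:R * q).
have Hr : 0 <= r by apply: divr_ge0; [exact: addr_ge0 | exact: mulr_ge0].
have := psd2 H a b (- r * z^*) 1.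
rewrite Haa (psd_herm H a b) -/z mulr0 add0r conjC1 !mulr1 mul1r -/P.
rewrite rmorphM rmorphN /= conjCK (geC0_conj Hr).

have -> : - r * z^* * z + - r * z * z^* + 1 * P = P - r * (2%:R * q) by rewrite /q; ring.
rewrite /r mulfVK; last by rewrite mulf_eq0 negb_or qn0 pnatr_eq0.
by rewrite opprD addrA subrr add0r oppr_ge0 ler10.
Qed.


Lemma widen_lt n (i : 'I_n) : (widen_ord (leqnSn n) i < n)%N.
Proof. exact: (ltn_ord i). Qed.

Lemma psd_schur A j : psd A -> A j j != 0 ->
  psd (fun x y => A x y - A x j * (A y j)^* / A j j).
Proof.
move=> H pn0 n c x.
have Hp := psd_diag H j; set p := A j j in Hp pn0 *.
have pr : p^* = p := geC0_conj Hp.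
set u := \sum_(i < n) c i * A (x i) j.
pose c' k := if (k < n)%N then c k else - u / p.
pose x' k := if (k < n)%N then x k else j.
have := H n.+1 c' x'.
rewrite big_ord_recr /=.
under eq_bigr => i _ do rewrite big_ord_recr /=.
rewrite big_split /=.
rewrite /c' /x' ltnn.
rewrite big_ord_recr /= ltnn.
under eq_bigr => i _ do under eq_bigr => k _ do rewrite !widen_lt.
under [X in _ + X + _]eq_bigr => i _ do rewrite widen_lt.
under [X in _ + _ + (X + _)]eq_bigr => i _ do rewrite widen_lt.
set S := \sum_(i < n) \sum_(k < n) _.
have E1 : \sum_(i < n) c i * (- u / p)^* * A (x i) j = u * (- u / p)^*.
  by rewrite /u big_distrl /=; apply: eq_bigr => i _; ring.
have E2 : \sum_(i < n) - u / p * (c i)^* * A j (x i) = - u / p * u^*.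
  rewrite /u rmorph_sum big_distrr /=; apply: eq_bigr => i _.
  by rewrite (psd_herm H (x i) j) rmorphM /=; ring.
rewrite E1 E2 rmorphM rmorphN fmorphV /= pr.
move=> Hg.
suff -> : \sum_(i < n) \sum_(j0 < n) c i * (c j0)^* *
    (A (x i) (x j0) - A (x i) j * (A (x j0) j)^* / p) = S - u * u^* / p.
  apply: le_trans Hg _; rewrite le_eqVlt; apply/orP; left; apply/eqP; rewrite -/p.
  by field.
rewrite /S /u rmorph_sum /= big_distrl /= big_distrl /= -sumrB.
apply: eq_bigr => i _.
rewrite big_distrr /= big_distrl /= -sumrB; apply: eq_bigr => k _.
by rewrite rmorphM /=; ring.
Qed.


Section Rec.
Variable A : nat -> nat -> C.
Hypothesis psdA : psd A.

Definition pivv (r : nat -> nat -> C) (j x : nat) : C :=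
  if r j j == 0 then 0 else r x j / sqrtC (r j j).

Fixpoint res (j : nat) : nat -> nat -> C :=
  match j with
  | 0 => A
  | j'.+1 => fun x y => res j' x y - pivv (res j') j' x * (pivv (res j') j' y)^*
  end.

Definition vv j x := pivv (res j) j x.

Lemma pivv_prod r j x y : 0 <= r j j -> r j j != 0 ->
  pivv r j x * (pivv r j y)^* = r x j * (r y j)^* / r j j.
Proof.
move=> H0 Hn; rewrite /pivv (negPf Hn).
have Hs : 0 <= sqrtC (r j j) by rewrite sqrtC_ge0.
have Hsn : sqrtC (r j j) != 0 by rewrite sqrtC_eq0.
rewrite rmorphM fmorphV /= (geC0_conj Hs).
rewrite -{3}(sqrtCK (r j j)) expr2.
by field.
Qed.

Lemma res_psd j : psd (res j).
Proof.
elim: j => [|j IH] //=.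
have H0 := psd_diag IH j.
case: (eqVneq (res j j j) 0) => Hj.
  apply: psd_ext IH => x y; rewrite /pivv Hj eqxx; ring.
apply: psd_ext (psd_schur IH Hj) => x y; by rewrite pivv_prod.
Qed.

Lemma res_pivot j : res j.+1 j j = 0.
Proof.
rewrite /=; have H0 := psd_diag (res_psd j) j.
case: (eqVneq (res j j j) 0) => Hj.
  rewrite /pivv Hj eqxx; ring.
rewrite pivv_prod // (geC0_conj H0) mulfK //; exact: subrr.
Qed.

Lemma res_diag0 j k : (j < k)%N -> res k j j = 0.
Proof.
elim: k => [//|k IH]; rewrite ltnS leq_eqVlt => /orP [/eqP ->|jk].
  exact: res_pivot.
have H1 := psd_diag (res_psd k.+1) j.
move: H1; rewrite /= (IH jk) add0r => H1.
have H2 : 0 <= pivv (res k) k j * (pivv (res k) k j)^* by exact: mul_conjC_ge0.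
have E : pivv (res k) k j * (pivv (res k) k j)^* = 0.
  by apply/eqP; rewrite eq_le H2 andbT -oppr_ge0.
by rewrite E oppr0.
Qed.

Lemma vv_zero a x : (x < a)%N -> vv a x = 0.
Proof.
move=> xa; rewrite /vv /pivv.
case: ifP => // _.
by rewrite (psd_zero (res_psd a) _ (res_diag0 xa)) mul0r.
Qed.

Lemma res_decomp B x y : A x y = res B x y + \sum_(a < B) vv a x * (vv a y)^*.
Proof.
elim: B => [|B IH]; first by rewrite big_ord0 addr0.
by rewrite big_ord_recr /= IH /vv; ring.
Qed.

Lemma chol B x y : (x < B)%N -> A x y = \sum_(a < B) vv a x * (vv a y)^*.
Proof.
move=> xB; rewrite (res_decomp B) (psd_zero (res_psd B) _ (res_diag0 xB)).
by rewrite add0r.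
Qed.

End Rec.
End Chol.

Lemma sum_delta (C : pzRingType) (F : nat -> C) (N j : nat) :
  \sum_(k < N) F k * (j == k :> nat)%:R = if (j < N)%N then F j else 0.
Proof.
elim: N => [|N IH]; first by rewrite big_ord0.
rewrite big_ord_recr /= IH ltnS.
case: (ltngtP j N) => [jN|jN|->].
- by rewrite mulr0 addr0.
- by rewrite mulr0 addr0.
- by rewrite mulr1 add0r.
Qed.

Lemma sum_widen0 (M : nmodType) (F : nat -> M) N N' : (N <= N')%N ->
  (forall k, (N <= k)%N -> F k = 0) -> \sum_(k < N') F k = \sum_(k < N) F k.
Proof.
move=> NN' H; rewrite -!(big_mkord xpredT) (big_cat_nat (leq0n N) NN') /=.
rewrite -[RHS]addr0; congr (_ + _).
rewrite big_nat_cond big1 // => k /andP[/andP[Hk _] _].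
exact: H.
Qed.

Lemma sum_indep (M : nmodType) (F : nat -> M) N N' :
  (forall k, (N <= k)%N -> F k = 0) -> (forall k, (N' <= k)%N -> F k = 0) ->
  \sum_(k < N') F k = \sum_(k < N) F k.
Proof.
move=> H H'.
rewrite -(sum_widen0 (leq_maxl N N') H) -(sum_widen0 (leq_maxr N N') H').
by [].
Qed.

Section Hil.
Variable R : realType.
Local Notation C := R[i].
Variable V : lmodType C.
Variable ip : V -> V -> C.
Hypothesis hip : inner_product ip.

Lemma ipDZr a x y z : ip x (a *: y + z) = a * ip x y + ip x z.
Proof. by case: hip. Qed.
Lemma ipC x y : ip y x = (ip x y)^*.
Proof. by case: hip. Qed.
Lemma ip_ge0 x : 0 <= ip x x.
Proof. by case: hip => _ _ H _; apply: H. Qed.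
Lemma ip_eq0 x : ip x x = 0 -> x = 0.
Proof. by case: hip => _ _ _; apply. Qed.

Lemma ip0r x : ip x 0 = 0.
Proof.
have := ipDZr 1 x 0 0; rewrite scaler0 addr0 mul1r => H.
by rewrite -[LHS](addrK (ip x 0)) -{1}H subrr.
Qed.
Lemma ipDr x y z : ip x (y + z) = ip x y + ip x z.
Proof. by rewrite -{1}[y]scale1r ipDZr mul1r. Qed.
Lemma ipZr a x y : ip x (a *: y) = a * ip x y.
Proof. by rewrite -[a *: y]addr0 ipDZr ip0r addr0. Qed.
Lemma ip0l x : ip 0 x = 0.
Proof. by rewrite ipC ip0r conjC0. Qed.
Lemma ipDl x y z : ip (y + z) x = ip y x + ip z x.
Proof. by rewrite ipC ipDr rmorphD /= -!ipC. Qed.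
Lemma ipZl a x y : ip (a *: y) x = a^* * ip y x.
Proof. by rewrite ipC ipZr rmorphM /= -ipC. Qed.
Lemma ipNr x y : ip x (- y) = - ip x y.
Proof. by rewrite -scaleN1r ipZr mulN1r. Qed.
Lemma ipBr x y z : ip x (y - z) = ip x y - ip x z.
Proof. by rewrite ipDr ipNr. Qed.
Lemma ipBl x y z : ip (y - z) x = ip y x - ip z x.
Proof. by rewrite ipC ipBr rmorphB /= -!ipC. Qed.
Lemma ip_sumr I (r : seq I) (P : pred I) (F : I -> V) x :
  ip x (\sum_(i <- r | P i) F i) = \sum_(i <- r | P i) ip x (F i).
Proof. exact: (big_morph (ip x) (ipDr x) (ip0r x)). Qed.
Lemma ip_suml I (r : seq I) (P : pred I) (F : I -> V) x :
  ip (\sum_(i <- r | P i) F i) x = \sum_(i <- r | P i) ip (F i) x.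
Proof. exact: (big_morph (ip^~ x) (fun y z => ipDl x y z) (ip0l x)). Qed.

Lemma Bessel u w : ip u u = 1 -> ip u w * (ip u w)^* <= ip w w.
Proof.
move=> Hu; set t := ip u w.
have := ip_ge0 (w - t *: u).
rewrite ipBl !ipBr !ipZl !ipZr Hu -/t (ipC u w) -/t subr_ge0.
by rewrite mulr1 subrr subr_ge0.
Qed.

Lemma par x y : 0 <= ip x y -> 4%:R * ip x y <= 2%:R * ip x x + 2%:R * ip y y.
Proof.
move=> H; have Hr := geC0_conj H.
have := ip_ge0 (x - y); rewrite ipBl !ipBr (ipC x y) Hr => H2.
rewrite -subr_ge0.
have -> : 2%:R * ip x x + 2%:R * ip y y - 4%:R * ip x y =
          2%:R * (ip x x - ip x y - (ip x y - ip y y)) by ring.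
by apply: mulr_ge0 => //; rewrite ler0n.
Qed.

Lemma normsq_opp x y : ip (x - y) (x - y) = ip (y - x) (y - x).
Proof.
have ipNl : forall a b, ip (- a) b = - ip a b.
  by move=> a b; rewrite ipC ipNr rmorphN /= -ipC.
by rewrite -[x - y]opprB ipNr ipNl opprK.
Qed.

Definition bnds (w : nat -> V) N v := forall k, (N <= k)%N -> ip (w k) v = 0.

Lemma bnds_mono w N N' v : (N <= N')%N -> bnds w N v -> bnds w N' v.
Proof. by move=> NN' H k Hk; apply: H; exact: leq_trans Hk. Qed.

Lemma bnds_comb w N a x y : bnds w N x -> bnds w N y -> bnds w N (a *: x + y).
Proof. by move=> Hx Hy k Hk; rewrite ipDZr Hx ?Hy // mulr0 addr0. Qed.

Section ONB.
Variable w : nat -> V.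
Hypothesis hw : orthonormal_basis ip w.

Lemma ip_ww i j : ip (w i) (w j) = (i == j)%:R.
Proof. by case: hw. Qed.

Lemma ip_w_sum N (a : nat -> C) j :
  ip (w j) (\sum_(k < N) a k *: w k) = if (j < N)%N then a j else 0.
Proof.
rewrite ip_sumr; under eq_bigr do rewrite ipZr ip_ww.
exact: sum_delta.
Qed.

Lemma span_bnds v : in_span w v -> exists N, bnds w N v.
Proof.
case=> n [c [k ->]]; exists (\max_(i < n) (k i).+1)%N => j Hj.
rewrite ip_sumr big1 // => i _; rewrite ipZr ip_ww.
case: (eqVneq j (k i)) => [Ej|]; last by rewrite mulr0.
have H : ((k i).+1 <= \max_(i0 < n) (k i0).+1)%N := leq_bigmax i.
rewrite -Ej in H.
by have := leq_trans H Hj; rewrite ltnn.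
Qed.

Lemma expand N v : bnds w N v -> v = \sum_(k < N) ip (w k) v *: w k.
Proof.
move=> Hb; apply/eqP; rewrite -subr_eq0; apply/eqP; apply: ip_eq0.
case: hw => _ /(_ (v - \sum_(k < N) ip (w k) v *: w k)) -> //; first by rewrite ip0r.
move=> j; rewrite ipBr (ip_w_sum N (fun k => ip (w k) v)); case: ifP => [_|/negbT]; first by rewrite subrr.
by rewrite -leqNgt => Hj; rewrite Hb // subrr.
Qed.

Lemma span_sum N (a : nat -> C) : in_span w (\sum_(k < N) a k *: w k).
Proof. by exists N, (fun i : 'I_N => a i), (fun i : 'I_N => val i). Qed.

Lemma span_w k : in_span w (w k).
Proof. by exists 1%N, (fun=> 1), (fun=> k); rewrite big_ord1 scale1r. Qed.

Lemma span_Zw a k : in_span w (a *: w k).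
Proof. by exists 1%N, (fun=> a), (fun=> k); rewrite big_ord1. Qed.

Lemma span0 : in_span w 0.
Proof. by exists 0%N, (fun=> 0), (fun=> 0%N); rewrite big_ord0. Qed.

Lemma lin_sum (G : V -> C) :
  (forall a g g', in_span w g -> in_span w g' -> G (a *: g + g') = a * G g + G g') ->
  forall N (a : nat -> C), G (\sum_(k < N) a k *: w k) = \sum_(k < N) a k * G (w k).
Proof.
move=> HG.
have G0 : G 0 = 0.
  have := HG 1 0 0 span0 span0; rewrite scaler0 addr0 mul1r => H.
  by rewrite -[LHS](addrK (G 0)) -{1}H subrr.
elim=> [|N IH] a; first by rewrite !big_ord0.
rewrite !big_ord_recr /= addrC HG ?span_w ?IH //.
  by rewrite addrC.
  exact: span_w.
exact: (span_sum N a).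
Qed.

Lemma antilin_sum (G : V -> C) :
  (forall a g g', in_span w g -> in_span w g' -> G (a *: g + g') = a^* * G g + G g') ->
  forall N (a : nat -> C), G (\sum_(k < N) a k *: w k) = \sum_(k < N) (a k)^* * G (w k).
Proof.
move=> HG N a.
have := @lin_sum (fun g => (G g)^*) _ N a.
move=> H; rewrite -[LHS]conjCK H // ?rmorph_sum /=.
  by apply: eq_bigr => k _; rewrite rmorphM /= conjCK.
by move=> b g g' Hg Hg'; rewrite HG // rmorphD rmorphM /= conjCK.
Qed.

Lemma normsq_sum N (d : nat -> C) :
  ip (\sum_(k < N) d k *: w k) (\sum_(k < N) d k *: w k) = \sum_(k < N) d k * (d k)^*.
Proof.
rewrite ip_suml; apply: eq_bigr => k _.
by rewrite ipZl (ip_w_sum N d) ltn_ord mulrC.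
Qed.

End ONB.

Lemma split_l m n (i : 'I_m) : split (lshift n i) = inl i.
Proof. exact: (unsplitK (inl i)). Qed.
Lemma split_r m n (i : 'I_n) : split (rshift m i) = inr i.
Proof. exact: (unsplitK (inr i)). Qed.

Section QPart.
Variables e f : nat -> V.
Variable Q : (V -> V) -> V -> V -> C.
Hypothesis he : orthonormal_basis ip e.
Hypothesis hf : orthonormal_basis ip f.
Hypothesis hQ : Q_linear_sesq ip e f Q.

Lemma span2_comb a rho sig : in_span2 ip e rho -> in_span2 ip e sig ->
  in_span2 ip e (fun v => a *: rho v + sig v).
Proof.
case=> n1 [c1 [k1 [l1 ->]]] [n2 [c2 [k2 [l2 ->]]]].
exists (n1 + n2)%N,
  (fun i => match split i with inl i1 => a * c1 i1 | inr i2 => c2 i2 end),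
  (fun i => match split i with inl i1 => k1 i1 | inr i2 => k2 i2 end),
  (fun i => match split i with inl i1 => l1 i1 | inr i2 => l2 i2 end).
apply: functional_extensionality => v.
rewrite big_split_ord /= scaler_sumr; congr (_ + _); apply: eq_bigr => i _.
  by rewrite split_l scalerA.
by rewrite split_r.
Qed.

Lemma span2_0 : in_span2 ip e (fun _ => 0).
Proof.
exists 0%N, (fun=> 0), (fun=> 0%N), (fun=> 0%N).
by apply: functional_extensionality => v; rewrite big_ord0.
Qed.

Lemma span2_ee k l : in_span2 ip e (ketbra ip (e k) (e l)).
Proof.
exists 1%N, (fun=> 1), (fun=> k), (fun=> l).
by apply: functional_extensionality => v; rewrite big_ord1 scale1r.
Qed.

Lemma Q0 g h : in_span f g -> in_span f h -> Q (fun _ => 0) g h = 0.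
Proof.
move=> Hg Hh.
have := hQ.1 1 _ _ span2_0 span2_0 g h Hg Hh.
have -> : (fun v : V => 1 *: (fun _ : V => (0 : V)) v + (fun _ : V => 0) v) = (fun _ => 0).
  by apply: functional_extensionality => v; rewrite scaler0 addr0.
rewrite mul1r => H.
by rewrite -[LHS](addrK (Q (fun _ => 0) g h)) -{1}H subrr.
Qed.

Lemma span2_Qsum (F : nat -> V -> V) (c : nat -> C) n :
  (forall i, in_span2 ip e (F i)) ->
  in_span2 ip e (fun v => \sum_(i < n) c i *: F i v) /\
  (forall g h, in_span f g -> in_span f h ->
     Q (fun v => \sum_(i < n) c i *: F i v) g h = \sum_(i < n) c i * Q (F i) g h).
Proof.
move=> HF; elim: n => [|n [IH1 IH2]].
  have -> : (fun v => \sum_(i < 0) c i *: F i v) = (fun _ => 0).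
    by apply: functional_extensionality => v; rewrite big_ord0.
  by split; [exact: span2_0 | move=> g h Hg Hh; rewrite Q0 // big_ord0].
have -> : (fun v => \sum_(i < n.+1) c i *: F i v) =
          (fun v => c n *: F n v + (fun v => \sum_(i < n) c i *: F i v) v).
  by apply: functional_extensionality => v; rewrite big_ord_recr /= addrC.
split; first exact: span2_comb.
move=> g h Hg Hh; rewrite hQ.1 // IH2 // big_ord_recr /= addrC //.
Qed.

Lemma ketbra_sum_l N (a : nat -> C) y :
  ketbra ip (\sum_(k < N) a k *: e k) y = fun v => \sum_(k < N) a k *: ketbra ip (e k) y v.
Proof.
apply: functional_extensionality => v; rewrite /ketbra scaler_sumr.
by apply: eq_bigr => k _; rewrite !scalerA mulrC.
Qed.

Lemma ketbra_sum_r N (b : nat -> C) x :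
  ketbra ip x (\sum_(l < N) b l *: e l) = fun v => \sum_(l < N) (b l)^* *: ketbra ip x (e l) v.
Proof.
apply: functional_extensionality => v; rewrite /ketbra ip_suml scaler_suml.
by apply: eq_bigr => l _; rewrite ipZl scalerA.
Qed.

Definition idx (k m : nat) : nat := pickle (k, m).
Definition dec (p : nat) : nat * nat := odflt (0%N, 0%N) (unpickle p).
Definition Akern (p q : nat) : C :=
  Q (ketbra ip (e (dec p).1) (e (dec q).1)) (f (dec p).2) (f (dec q).2).

Lemma Akern_idx k m l j : Akern (idx k m) (idx l j) = Q (ketbra ip (e k) (e l)) (f m) (f j).
Proof. by rewrite /Akern /dec /idx !pickleK. Qed.

Lemma Q_ketbra_ff k l N (b b' : nat -> C) :
  Q (ketbra ip (e k) (e l)) (\sum_(m < N) b m *: f m) (\sum_(j < N) b' j *: f j) =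
  \sum_(m < N) (b m)^* * \sum_(j < N) b' j * Q (ketbra ip (e k) (e l)) (f m) (f j).
Proof.
have H2 := span2_ee k l.
rewrite (antilin_sum (w := f) (G := fun g => Q (ketbra ip (e k) (e l)) g _)); last first.
  by move=> a g g' Hg Hg'; apply: (hQ.2 _ H2).2 => //; exact: span_sum.
apply: eq_bigr => m _; congr (_ * _).
rewrite (lin_sum (w := f) (G := fun h => Q (ketbra ip (e k) (e l)) (f m) h)) //.
by move=> a g g' Hg Hg'; apply: (hQ.2 _ H2).1 => //; exact: span_w.
Qed.

Lemma Qexp (a a' b b' : nat -> C) N :
  Q (ketbra ip (\sum_(k < N) a k *: e k) (\sum_(l < N) a' l *: e l))
    (\sum_(m < N) b m *: f m) (\sum_(j < N) b' j *: f j) =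
  \sum_(k < N) \sum_(m < N) \sum_(l < N) \sum_(j < N)
     (a k * (b m)^*) * (a' l * (b' j)^*)^* * Akern (idx k m) (idx l j).
Proof.
set Y := \sum_(l < N) a' l *: e l.
have Hg := span_sum f N b; have Hh := span_sum f N b'.
have Hk : forall k, in_span2 ip e (ketbra ip (e k) Y) /\
   Q (ketbra ip (e k) Y) (\sum_(m < N) b m *: f m) (\sum_(j < N) b' j *: f j) =
   \sum_(l < N) (a' l)^* * Q (ketbra ip (e k) (e l)) (\sum_(m < N) b m *: f m)
                                                   (\sum_(j < N) b' j *: f j).
  move=> k; rewrite /Y ketbra_sum_r.
  have [H1 H2] := span2_Qsum (fun l => (a' l)^*) N (fun l => span2_ee k l).
  by split; [exact: H1 | exact: H2].
rewrite ketbra_sum_l.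
have [_ H2] := span2_Qsum a N (fun k => (Hk k).1).
rewrite H2 //; apply: eq_bigr => k _.
rewrite (Hk k).2 big_distrr /= [RHS]exchange_big /=; apply: eq_bigr => l _.
rewrite Q_ketbra_ff !big_distrr /=; apply: eq_bigr => m _.
rewrite !big_distrr /=; apply: eq_bigr => j _.
by rewrite Akern_idx rmorphM /= conjCK; ring.
Qed.


Hypothesis hcp : completely_positive ip e f Q.

Lemma Q_scaled k l m j c c' :
  Q (ketbra ip (c *: e k) (c' *: e l)) (f m) (f j) =
  c * c'^* * Q (ketbra ip (e k) (e l)) (f m) (f j).
Proof.
have -> : ketbra ip (c *: e k) (c' *: e l) =
   (fun v => (c * c'^*) *: ketbra ip (e k) (e l) v + (fun _ => 0) v).
  apply: functional_extensionality => v.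
  by rewrite /ketbra ipZl addr0 !scalerA mulrC mulrA.
rewrite hQ.1 ?Q0 ?addr0 //.
all: first [exact: span2_ee | exact: span2_0 | exact: span_w].
Qed.

Lemma psdA : psd Akern.
Proof.
move=> n c x.
have := @hcp n (fun i : 'I_n => c i *: e (dec (x i)).1) (fun i : 'I_n => f (dec (x i)).2).
rewrite /Akern.
under eq_bigr do under eq_bigr do rewrite Q_scaled.
apply; move=> i; [exact: span_Zw | exact: span_w].
Qed.

Definition bnd (w : nat -> V) (v : V) : nat :=
  epsilon (inhabits 0%N) (fun N => bnds w N v).

Lemma bnd_spec w N v : bnds w N v -> bnds w (bnd w v) v.
Proof. move=> Hv; have H : exists N, bnds w N v by exists N. exact: (epsilon_spec (inhabits 0%N) (fun N => bnds w N v) H). Qed.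

Definition Kop (a : nat) (phi g : V) : C :=
  \sum_(k < bnd e phi) \sum_(m < bnd f g)
     ip (e k) phi * (ip (f m) g)^* * vv Akern a (idx k m).

Lemma Kbound a phi g N1 N2 :
  bnds e N1 phi -> bnds f N2 g ->
  Kop a phi g = \sum_(k < N1) \sum_(m < N2)
     ip (e k) phi * (ip (f m) g)^* * vv Akern a (idx k m).
Proof.
move=> H1 H2; have B1 := bnd_spec H1; have B2 := bnd_spec H2.
rewrite /Kop.
rewrite (sum_indep (F := fun k => \sum_(m < bnd f g)
     ip (e k) phi * (ip (f m) g)^* * vv Akern a (idx k m)) (N := N1)); first last.
- by move=> k Hk; apply: big1 => m _; rewrite B1 // !mul0r.
- by move=> k Hk; apply: big1 => m _; rewrite H1 // !mul0r.
apply: eq_bigr => k _.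
apply: (sum_indep (F := fun m => ip (e k) phi * (ip (f m) g)^* * vv Akern a (idx k m))).
- by move=> m Hm; rewrite H2 // conjC0 mulr0 mul0r.
- by move=> m Hm; rewrite B2 // conjC0 mulr0 mul0r.
Qed.


Definition Bmax N := (\max_(k < N) \max_(m < N) (idx k m).+1)%N.

Lemma idx_lt k m N : (k < N)%N -> (m < N)%N -> (idx k m < Bmax N)%N.
Proof.
move=> kN mN.
have H1 : ((idx k m).+1 <= \max_(m0 < N) (idx k m0).+1)%N.
  exact: (leq_bigmax (F := fun m0 : 'I_N => (idx k m0).+1) (Ordinal mN)).
have H2 : (\max_(m0 < N) (idx k m0).+1 <= Bmax N)%N.
  exact: (leq_bigmax (F := fun k0 : 'I_N => \max_(m0 < N) (idx k0 m0).+1) (Ordinal kN)).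
exact: leq_trans H1 H2.
Qed.

Lemma Kzero a phi g N : in_span e phi -> in_span f g ->
  bnds e N phi -> bnds f N g -> (Bmax N <= a)%N -> Kop a phi g = 0.
Proof.
move=> Hp Hg H1 H2 Ha; rewrite (Kbound _ H1 H2).
apply: big1 => k _; apply: big1 => m _.
by rewrite (vv_zero psdA) ?mulr0 // (leq_trans (idx_lt (ltn_ord k) (ltn_ord m)) Ha).
Qed.

Lemma prod_sums N (X Y : nat -> nat -> C) :
  (\sum_(k < N) \sum_(m < N) X k m) * (\sum_(l < N) \sum_(j < N) Y l j)^* =
  \sum_(k < N) \sum_(m < N) \sum_(l < N) \sum_(j < N) X k m * (Y l j)^*.
Proof.
rewrite big_distrl; apply: eq_bigr => k _; rewrite big_distrl; apply: eq_bigr => m _.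
rewrite rmorph_sum big_distrr; apply: eq_bigr => l _.
by rewrite rmorph_sum big_distrr.
Qed.

Lemma exch4 n N (T : nat -> nat -> nat -> nat -> nat -> C) :
  \sum_(a < n) \sum_(k < N) \sum_(m < N) \sum_(l < N) \sum_(j < N) T a k m l j =
  \sum_(k < N) \sum_(m < N) \sum_(l < N) \sum_(j < N) \sum_(a < n) T a k m l j.
Proof.
rewrite exchange_big; apply: eq_bigr => k _.
rewrite exchange_big; apply: eq_bigr => m _.
rewrite exchange_big; apply: eq_bigr => l _.
by rewrite exchange_big.
Qed.

Lemma main_sum phi phi' g h N n :
  in_span e phi -> in_span e phi' -> in_span f g -> in_span f h ->
  bnds e N phi -> bnds e N phi' -> bnds f N g -> bnds f N h -> (Bmax N <= n)%N ->
  \sum_(a < n) Kop a phi g * (Kop a phi' h)^* = Q (ketbra ip phi phi') g h.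
Proof.
move=> Hp Hp' Hg Hh B1 B2 B3 B4 Hn.
under eq_bigr => a _ do rewrite (Kbound _ B1 B3) (Kbound _ B2 B4)
  (@prod_sums N (fun k m => ip (e k) phi * (ip (f m) g)^* * vv Akern a (idx k m))
             (fun k m => ip (e k) phi' * (ip (f m) h)^* * vv Akern a (idx k m))).
rewrite (@exch4 n N (fun a k m l j => ip (e k) phi * (ip (f m) g)^* * vv Akern a (idx k m) *
   (ip (e l) phi' * (ip (f j) h)^* * vv Akern a (idx l j))^*)).
have E := Qexp (fun k => ip (e k) phi) (fun l => ip (e l) phi')
               (fun m => ip (f m) g) (fun j => ip (f j) h) N.
rewrite -(expand he B1) -(expand he B2) -(expand hf B3) -(expand hf B4) in E.
rewrite E; apply: eq_bigr => k _; apply: eq_bigr => m _; apply: eq_bigr => l _.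
apply: eq_bigr => j _.
rewrite (chol psdA (B := n) _ (leq_trans (idx_lt (ltn_ord k) (ltn_ord m)) Hn)).
rewrite big_distrr; apply: eq_bigr => a _.
by rewrite !rmorphM /=; ring.
Qed.


Lemma span_bnd w (hw : orthonormal_basis ip w) v : in_span w v -> bnds w (bnd w v) v.
Proof. by move=> /(span_bnds hw) [N HN]; exact: bnd_spec HN. Qed.

Lemma Kop_gen a : generalized_operator e f (Kop a).
Proof.
split.
- move=> s phi phi' h Hp Hp' Hh.
  have B1 := span_bnd he Hp; have B2 := span_bnd he Hp'; have B3 := span_bnd hf Hh.
  set N := (bnd e phi + bnd e phi')%N.
  have C1 : bnds e N phi by apply: bnds_mono B1; exact: leq_addr.
  have C2 : bnds e N phi' by apply: bnds_mono B2; exact: leq_addl.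
  rewrite (Kbound _ (bnds_comb s C1 C2) B3) (Kbound _ C1 B3) (Kbound _ C2 B3).
  rewrite big_distrr -big_split; apply: eq_bigr => k _.
  rewrite big_distrr -big_split; apply: eq_bigr => m _.
  by rewrite /= ipDZr; ring.
- move=> s phi h h' Hp Hh Hh'.
  have B1 := span_bnd he Hp; have B2 := span_bnd hf Hh; have B3 := span_bnd hf Hh'.
  set N := (bnd f h + bnd f h')%N.
  have C1 : bnds f N h by apply: bnds_mono B2; exact: leq_addr.
  have C2 : bnds f N h' by apply: bnds_mono B3; exact: leq_addl.
  rewrite (Kbound _ B1 (bnds_comb s C1 C2)) (Kbound _ B1 C1) (Kbound _ B1 C2).
  rewrite big_distrr -big_split; apply: eq_bigr => k _.
  rewrite big_distrr -big_split; apply: eq_bigr => m _.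
  by rewrite /= ipDZr rmorphD rmorphM /=; ring.
Qed.

Lemma sum_mono_ge0 (F : nat -> C) n n' : (forall i, 0 <= F i) -> (n <= n')%N ->
  \sum_(i < n) F i <= \sum_(i < n') F i.
Proof.
move=> HF H; rewrite -!(big_mkord xpredT) (big_cat_nat (leq0n n) H) /= lerDl.
by apply: sumr_ge0 => i _.
Qed.

Lemma Kop_sums phi phi' g h :
  in_span e phi -> in_span e phi' -> in_span f g -> in_span f h ->
  sums_to (fun a => Kop a phi g * (Kop a phi' h)^*) (Q (ketbra ip phi phi') g h).
Proof.
move=> Hp Hp' Hg Hh.
set N := (bnd e phi + bnd e phi' + bnd f g + bnd f h)%N.
have B1 : bnds e N phi by apply: bnds_mono (span_bnd he Hp); rewrite /N; lia.
have B2 : bnds e N phi' by apply: bnds_mono (span_bnd he Hp'); rewrite /N; lia.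
have B3 : bnds f N g by apply: bnds_mono (span_bnd hf Hg); rewrite /N; lia.
have B4 : bnds f N h by apply: bnds_mono (span_bnd hf Hh); rewrite /N; lia.
set u := fun a => _.
have uz : forall a, (Bmax N <= a)%N -> u a = 0.
  by move=> a Ha; rewrite /u (Kzero Hp Hg B1 B3 Ha) mul0r.
split.
  exists (\sum_(i < Bmax N) `|u i|) => n.
  rewrite -(sum_widen0 (F := fun i => `|u i|) (leq_maxr n (Bmax N))); last first.
    by move=> k Hk; rewrite uz // normr0.
  apply: (sum_mono_ge0 (F := fun i => `|u i|)) => //; last exact: leq_maxl.
move=> eps Heps; exists (Bmax N) => n Hn.
by rewrite /u (main_sum Hp Hp' Hg Hh B1 B2 B3 B4 Hn) subrr normr0.
Qed.


Lemma span2_ketbra N (a a' : nat -> C) :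
  in_span2 ip e (ketbra ip (\sum_(k < N) a k *: e k) (\sum_(l < N) a' l *: e l)).
Proof.
rewrite ketbra_sum_l.
have HF : forall k, in_span2 ip e (ketbra ip (e k) (\sum_(l < N) a' l *: e l)).
  move=> k; rewrite ketbra_sum_r.
  exact: (span2_Qsum (fun l => (a' l)^*) N (fun l => span2_ee k l)).1.
exact: (span2_Qsum a N HF).1.
Qed.

Lemma vS_diff (c : nat -> C) n m : (n <= m)%N ->
  ip (\sum_(k < m) c k *: f k - \sum_(k < n) c k *: f k)
     (\sum_(k < m) c k *: f k - \sum_(k < n) c k *: f k) =
  \sum_(k < m) c k * (c k)^* - \sum_(k < n) c k * (c k)^*.
Proof.
move=> nm.
have E1 : \sum_(k < n) c k *: f k = \sum_(k < m) (if (k < n)%N then c k else 0) *: f k.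
  rewrite (sum_widen0 (F := fun k => (if (k < n)%N then c k else 0) *: f k) nm).
    by apply: eq_bigr => k _; rewrite ltn_ord.
  by move=> k Hk; rewrite ltnNge Hk /= scale0r.
have E2 : \sum_(k < n) c k * (c k)^* =
   \sum_(k < m) (if (k < n)%N then c k else 0) * (if (k < n)%N then c k else 0)^*.
  rewrite (sum_widen0 (F := fun k => (if (k < n)%N then c k else 0) *
                                     (if (k < n)%N then c k else 0)^*) nm).
    by apply: eq_bigr => k _; rewrite ltn_ord.
  by move=> k Hk; rewrite ltnNge Hk /= mul0r.
rewrite E1 E2 -sumrB.
have -> : \sum_(i < m) (c i *: f i - (if (i < n)%N then c i else 0) *: f i) =
   \sum_(i < m) (c i - (if (i < n)%N then c i else 0)) *: f i.
  by apply: eq_bigr => k _; rewrite scalerBl.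
rewrite (normsq_sum hf m (fun k => c k - (if (k < n)%N then c k else 0))) -sumrB.
apply: eq_bigr => k _.
by case: ifP => _; rewrite ?subrr ?mul0r ?subr0 ?conjC0 ?mulr0 // subr0.
Qed.

Definition ReC (x : C) : R := complex.Re x.

Lemma part3 :
  (forall rho : V -> V, in_span2 ip e rho ->
     exists T : V -> V, bounded_operator ip T /\
       forall g h : V, in_span f g -> in_span f h -> Q rho g h = ip g (T h)) ->
  ip_complete ip -> forall a, maps_into_H ip e f (Kop a).
Proof.
move=> Hb hc a phi Hp.
have Bp := span_bnd he Hp; set Np := bnd e phi in Bp.
have Hr : in_span2 ip e (ketbra ip phi phi).
  by rewrite (expand he Bp); exact: (span2_ketbra Np (fun k => ip (e k) phi) (fun k => ip (e k) phi)).
case: (Hb _ Hr) => T [[Tlin [M HM]] HT].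
pose c := fun m => Kop a phi (f m).
pose S := fun n => \sum_(m < n) c m * (c m)^*.
pose vS := fun n => \sum_(m < n) c m *: f m.
have Kgen := Kop_gen a.
have KvS : forall n, Kop a phi (vS n) = S n.
  move=> n; rewrite /vS (antilin_sum (w := f) (G := Kop a phi)); last first.
    by move=> s g g' Hg Hg'; apply: Kgen.2.
  by apply: eq_bigr => m _; rewrite mulrC.
have S_ge0 : forall n, 0 <= S n.
  by move=> n; apply: sumr_ge0 => m _; exact: mul_conjC_ge0.
have nvS : forall n, ip (vS n) (vS n) = S n by move=> n; exact: (normsq_sum hf).
have bvS : forall n, bnds f n (vS n).
  move=> n k Hk; rewrite /vS (ip_w_sum hf n c k).
  by rewrite ltnNge Hk.
have M0 : 0 <= M.
  have := HM (e 0%N); rewrite /normsq (ip_ww he) eqxx mulr1.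
  exact: le_trans (ip_ge0 _).
pose D := (1 + M) / 4%:R * 2%:R.
have D0 : 0 <= D.
  by apply: mulr_ge0; [apply: divr_ge0; [apply: addr_ge0 | rewrite ler0n] | rewrite ler0n].
have Sbound : forall n, S n <= D.
  move=> n.
  have Bn : bnds f (Np + n) (vS n) by apply: bnds_mono (bvS n); exact: leq_addl.
  have Bp' : bnds e (Np + n) phi by apply: bnds_mono Bp; exact: leq_addr.
  set B := maxn (Bmax (Np + n)) a.+1.
  have Hsp : in_span f (vS n) by exact: span_sum.
  have E := main_sum Hp Hp Hsp Hsp Bp' Bp' Bn Bn (leq_maxl (Bmax (Np + n)) a.+1).
  rewrite -/B HT // in E.
  set z := ip (vS n) (T (vS n)) in E.
  have aB : (a < B)%N by rewrite leq_maxr.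
  have zge : S n * S n <= z.
    rewrite -E (bigD1 (Ordinal aB)) //= KvS (geC0_conj (S_ge0 n)) lerDl.
    by apply: sumr_ge0 => i _; exact: mul_conjC_ge0.
  have z0 : 0 <= z by apply: le_trans zge; apply: mulr_ge0.
  have Pz := par z0.
  have HTv := HM (vS n); rewrite /normsq nvS in HTv.
  have H4 : 4%:R * (S n * S n) <= 4%:R * (S n * D).
    apply: le_trans (_ : 4%:R * z <= _); first by rewrite ler_pM2l ?ltr0n.
    apply: le_trans Pz _; rewrite nvS.
    have -> : 4%:R * (S n * D) = 2%:R * S n + 2%:R * (M * S n).
      by rewrite /D; field.
    by rewrite lerD2l ler_pM2l ?ltr0n.
  rewrite ler_pM2l ?ltr0n // in H4.
  case: (eqVneq (S n) 0) => [->//|Sn0].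
  have Sp : 0 < S n by rewrite lt_def Sn0 S_ge0.
  by rewrite ler_pM2l in H4.
have Smono : forall n m, (n <= m)%N -> S n <= S m.
  move=> n m nm; apply: (sum_mono_ge0 (F := fun k => c k * (c k)^*)) => // k.
  exact: mul_conjC_ge0.
have Sreal : forall n, (ReC (S n))%:C%C = S n.
  by move=> n; apply: RRe_real; exact: ger0_real.
have Dreal : (ReC D)%:C%C = D by apply: RRe_real; exact: ger0_real.
pose E := fun r : R => exists n, r = ReC (S n).
have hasE : has_sup E.
  split; first by exists (ReC (S 0%N)), 0%N.
  exists (ReC D) => r [n ->]; rewrite -lecR Sreal Dreal; exact: Sbound.
have Hcauchy : forall eps : C, 0 < eps -> exists N : nat, forall m n : nat,
    (N <= m)%N -> (N <= n)%N -> normsq ip (vS m - vS n) < eps.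
  move=> eps Heps.
  have er : (ReC eps)%:C%C = eps by apply: RRe_real; exact: gtr0_real.
  have epos : 0 < ReC eps by rewrite -ltcR er.
  have [r [n0 ->] Hr0] := sup_adherent epos hasE.
  exists n0 => m n Hm Hn.
  have key : forall m n, (n0 <= n)%N -> (n <= m)%N ->
      normsq ip (vS m - vS n) < eps.
    move=> m' n' Hn' nm'; rewrite /normsq vS_diff //; change (S m' - S n' < eps).
    rewrite -(Sreal m') -(Sreal n') -er -rmorphB ltcR.
    have H1 : ReC (S m') <= sup E by apply: sup_upper_bound => //; exists m'.
    have H2 : ReC (S n0) <= ReC (S n') by rewrite -lecR !Sreal; exact: Smono.
    lra.
  case: (leqP n m) => nm; first exact: key.
  by rewrite /normsq normsq_opp; apply: key => //; exact: ltnW.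
have [l Hl] := hc vS Hcauchy.
have Hlc : forall j, ip (f j) l = c j.
  move=> j; apply/eqP; rewrite eq_sym -subr_eq0; apply/eqP.
  set d := c j - ip (f j) l.
  case: (eqVneq d 0) => // dn0.
  have dp : 0 < d * d^* by rewrite mul_conjC_gt0.
  have [N HN] := Hl _ dp.
  have := HN (maxn N j.+1) (leq_maxl _ _).
  have Hff : ip (f j) (f j) = 1 by rewrite (ip_ww hf) eqxx.
  have Hb' := @Bessel (f j) (vS (maxn N j.+1) - l) Hff.
  have jlt : (j < maxn N j.+1)%N by rewrite leq_max leqnn orbT.
  rewrite ipBr /vS (ip_w_sum hf) jlt -/d in Hb'.
  move=> Hlt; have := le_lt_trans Hb' Hlt.
  by rewrite ltxx.
exists l => h Hh.
have Bh := span_bnd hf Hh; have Eh := expand hf Bh.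
rewrite [in LHS]Eh [in RHS]Eh.
have HG : forall s g g', in_span f g -> in_span f g' ->
    Kop a phi (s *: g + g') = s^* * Kop a phi g + Kop a phi g'.
  by move=> s g g' Hg Hg'; apply: Kgen.2.
rewrite (antilin_sum (w := f) (G := Kop a phi) HG (bnd f h) (fun m => ip (f m) h)).
rewrite ip_suml; apply: eq_bigr => m _.
by rewrite ipZl Hlc.
Qed.

End QPart.
End Hil.

Unset Implicit Arguments.

Theorem theorem6p2 (R : realType) (V : lmodType R[i]) (ip : V -> V -> R[i])
    (e f : nat -> V) (Q : (V -> V) -> V -> V -> R[i]) :
  hilbert_space ip ->
  orthonormal_basis ip e -> orthonormal_basis ip f ->
  Q_linear_sesq ip e f Q ->
  completely_positive ip e f Q ->
  exists K : nat -> V -> V -> R[i],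
    (forall alpha : nat, generalized_operator e f (K alpha)) /\
    (forall phi phi' g h : V,
       in_span e phi -> in_span e phi' -> in_span f g -> in_span f h ->
       sums_to (fun alpha => K alpha phi g * (K alpha phi' h)^*)
               (Q (ketbra ip phi phi') g h)) /\
    ((forall rho : V -> V, in_span2 ip e rho ->
        exists T : V -> V, bounded_operator ip T /\
          forall g h : V, in_span f g -> in_span f h -> Q rho g h = ip g (T h)) ->
     forall alpha : nat, maps_into_H ip e f (K alpha)).
Proof.
move=> [hip hc] he hf hQ hcp.
exists (Kop ip e f Q).
split; first by move=> a; apply: Kop_gen.
split; first by move=> phi phi' g h Hp Hp' Hg Hh; apply: Kop_sums.
by move=> Hb a; apply: part3.
Qed.
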